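(* Let $V:\mathbb{R}\to\mathbb{R}$ be analytic at the origin. Then $V$ is separable (i.e. there exist univariate functions $F,G$ with $V\left(\frac{u+v}{2}\right)-V\left(\frac{u-v}{2}\right)=F(u)\,G(v)$ for all $u,v$) if and only if $V$ admits the functional form $$V\left(\frac{u+v}{2}\right)=\frac{1}{2}f(u)\,g(v)+h(u,v)$$ for some functions $f$ of $u$, $g$ of $v$, and $h$ of $(u,v)$ satisfying $g(-v)=-g(v)$ and $h(u,-v)=h(u,v)$. In this case the divisors of $V$ are $F=f$ and $G=g$.
   Context: A potential $V(q)$ is called separable if $V\left(\frac{u+v}{2}\right)-V\left(\frac{u-v}{2}\right)=F(u)\,G(v)$ where $F$ and $G$ are univariate functions of $u$ and $v$ respectively; $F$ and $G$ are called the divisors of $V$. *)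

(* Defs.v *)
From Stdlib Require Import Reals.
From Coquelicot Require Import Coquelicot.
Open Scope R_scope.

Definition analytic_at_0 (V : R -> R) : Prop :=
  exists (a : nat -> R) (r : R), 0 < r /\
    forall x : R, Rabs x < r -> is_pseries a x (V x).

Definition divisors (V F G : R -> R) : Prop :=
  forall u v : R, V ((u + v) / 2) - V ((u - v) / 2) = F u * G v.

Definition separable (V : R -> R) : Prop :=
  exists F G : R -> R, divisors V F G.

(* Main.v *)
Require Import Defs.
From Stdlib Require Import Reals Lra.
From Coquelicot Require Import Coquelicot.
Open Scope R_scope.

Lemma part2 (V : R -> R) (f g : R -> R) (h : R -> R -> R) :
     (forall v, g (- v) = - g v) ->
     (forall u v, h u (- v) = h u v) ->
     (forall u v, V ((u + v) / 2) = / 2 * f u * g v + h u v) ->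
     divisors V f g.
Proof.
  intros Hg Hh HV u v.
  rewrite (HV u v).
  replace (u - v) with (u + - v) by ring.
  rewrite (HV u (- v)), Hg, Hh. field.
Qed.

Theorem theorem1 (V : R -> R) (HV : analytic_at_0 V) :
  (separable V <->
   exists (f g : R -> R) (h : R -> R -> R),
     (forall v, g (- v) = - g v) /\
     (forall u v, h u (- v) = h u v) /\
     (forall u v, V ((u + v) / 2) = / 2 * f u * g v + h u v)) /\
  (forall (f g : R -> R) (h : R -> R -> R),
     (forall v, g (- v) = - g v) ->
     (forall u v, h u (- v) = h u v) ->
     (forall u v, V ((u + v) / 2) = / 2 * f u * g v + h u v) ->
     divisors V f g).
Proof.
  split; [split|].
  - intros [F [G HD]].
    assert (Hodd : forall u v, F u * G (- v) = - (F u * G v)).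
    { intros u v. rewrite <- (HD u v), <- (HD u (- v)).
      replace (u + - v) with (u - v) by ring.
      replace (u - - v) with (u + v) by ring. ring. }
    exists F, (fun v => (G v - G (- v)) / 2),
      (fun u v => V ((u + v) / 2) - / 2 * F u * ((G v - G (- v)) / 2)).
    split; [|split].
    + intros v. rewrite Ropp_involutive. field.
    + intros u v. rewrite Ropp_involutive.
      assert (E := HD u v).
      assert (E1 := Hodd u v).
      replace (u + - v) with (u - v) by ring.
      assert (V ((u - v) / 2) = V ((u + v) / 2) - F u * G v) by lra.
      rewrite H.
      replace (/ 2 * F u * ((G (- v) - G v) / 2)) with (/ 4 * (F u * G (- v)) - / 4 * (F u * G v)) by field.
      replace (/ 2 * F u * ((G v - G (- v)) / 2)) with (/ 4 * (F u * G v) - / 4 * (F u * G (- v))) by field.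
      rewrite E1. field.
    + intros u v. ring.
  - intros [f [g [h [Hg [Hh HV']]]]]. exists f, g. exact (part2 V f g h Hg Hh HV').
  - intros f g h. apply part2.
Qed.
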